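(* Let $C$ be a subring of a ring $D$ (with the same identity). Then $R[D,C]$ is weakly $r$-clean if and only if $D$ is $r$-clean and $C$ is weakly $r$-clean.
   Context: Rings are associative with identity. For a subring $C$ of $D$, $R[D,C]$ is the ring of all sequences $(a_1,a_2,\dots,a_n,c,c,c,\dots)$ with $n\ge1$, $a_i\in D$, $c\in C$ (i.e. sequences in $D$ that are eventually constant with constant value in $C$), with componentwise addition and multiplication. $Idem(R)$ denotes idempotents and $Reg(R)=\{r: r=ryr \text{ for some } y\in R\}$ regular elements. A ring is $r$-clean if every element is $r+e$ with $r\in Reg$, $e\in Idem$; an element is weakly $r$-clean if it equals $r+e$ or $r-e$ with $r\in Reg$, $e\in Idem$, and a ring is weakly $r$-clean if all its elements are. *)

(* Defs.v *)
From HB Require Import structures.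
From mathcomp Require Import all_boot all_order all_algebra.
From mathcomp Require Import boolp functions.
Set Implicit Arguments. Unset Strict Implicit. Unset Printing Implicit Defensive.
Import GRing.Theory.
Local Open Scope ring_scope.

(* Ring-theoretic notions, relative to a subring given by a predicate S of an
   ambient ring R (the ring operations of S are those of R). *)
Section Notions.
Variable R : pzRingType.

Definition Idem_in (S : {pred R}) (e : R) : Prop := e \in S /\ e * e = e.
Definition Reg_in (S : {pred R}) (r : R) : Prop :=
  r \in S /\ exists2 y, y \in S & r = r * y * r.

Definition rclean_in (S : {pred R}) : Prop :=
  forall x, x \in S -> exists r e, [/\ Reg_in S r, Idem_in S e & x = r + e].

Definition weakly_rclean_elt_in (S : {pred R}) (x : R) : Prop :=
  exists r e, [/\ Reg_in S r, Idem_in S e & (x = r + e \/ x = r - e)].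

Definition weakly_rclean_in (S : {pred R}) : Prop :=
  forall x, x \in S -> weakly_rclean_elt_in S x.

Definition rclean : Prop := rclean_in predT.
Definition weakly_rclean : Prop := weakly_rclean_in predT.
End Notions.

(* R[D,C]: sequences in D (elements of the pointwise ring nat -> D) that are
   eventually constant with constant value in C. *)
Definition RDC (D : pzRingType) (C : {pred D}) : {pred nat -> D} :=
  fun f => `[< exists n, exists2 c, c \in C & forall i, (n <= i)%N -> f i = c >].

(* Main.v *)
Require Import Defs.
From HB Require Import structures.
From mathcomp Require Import all_boot all_order all_algebra.
From mathcomp Require Import boolp functions.
From mathcomp Require Import zify.
Local Open Scope ring_scope.
Import GRing.Theory.

Lemma RDCP (D : pzRingType) (C : {pred D}) (f : nat -> D) :
  f \in RDC C <-> exists n, exists2 c, c \in C & forall i, (n <= i)%N -> f i = c.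
Proof. by rewrite unfold_in; split => [/asboolP|?]; [|apply/asboolP]. Qed.

Lemma RDC_ite (D : pzRingType) (C : {pred D}) (n : nat) (g : nat -> D) (c : D) :
  c \in C -> (fun i => if (i < n)%N then g i else c) \in RDC C.
Proof.
move=> Cc; apply/RDCP; exists n, c => // i Hi.
by rewrite ltnNge Hi.
Qed.

Lemma fmulE (D : pzRingType) (f g : nat -> D) i : (f * g) i = f i * g i.
Proof. by []. Qed.
Lemma faddE (D : pzRingType) (f g : nat -> D) i : (f + g) i = f i + g i.
Proof. by []. Qed.
Lemma fsubE (D : pzRingType) (f g : nat -> D) i : (f - g) i = f i - g i.
Proof. by []. Qed.

Lemma foppE (D : pzRingType) (f : nat -> D) i : (- f) i = - f i.
Proof. by []. Qed.

Theorem proposition2p13 (D : pzRingType) (C : {pred D})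
    (HC : GRing.subring_closed C) :
  weakly_rclean_in (RDC C) <-> rclean D /\ weakly_rclean_in C.
Proof.
have Cs : forall c, c \in C -> (fun _ : nat => c) \in RDC C.
  by move=> c Cc; apply/RDCP; exists 0%N, c.
split.
- move=> H; split.
  + move=> x _.
    have Hs : (fun i : nat => if i == 0%N then x else if i == 1%N then - x else 0) \in RDC C.
      apply/RDCP; exists 2%N, 0.
        by case: HC => H1 HB _; rewrite -(subrr 1); apply: HB.
      by case=> [|[|i]].
    have [r [e [[_ [y _ Hr]] [_ He] Hx]]] := H _ Hs.
    case: Hx => Hx.
    * exists (r 0%N), (e 0%N); split.
      -- split => //; exists (y 0%N) => //; exact: (congr1 (fun f => f 0%N) Hr).
      -- split => //; exact: (congr1 (fun f => f 0%N) He).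
      -- exact: (congr1 (fun f => f 0%N) Hx).
    * exists (- r 1%N), (e 1%N); split.
      -- split => //; exists (- y 1%N) => //.
         by have /= E := congr1 (fun f => f 1%N) Hr; rewrite mulrNN mulrN; congr (- _); exact: E.
      -- split => //; exact: (congr1 (fun f => f 1%N) He).
      -- have E : - x = r 1%N - e 1%N := congr1 (fun f => f 1%N) Hx.
         by rewrite -[x]opprK E opprB addrC.
  + move=> x Cx.
    have [r [e [[Rr [y Ry Hr]] [Re He] Hx]]] := H _ (Cs x Cx).
    move/RDCP: Rr => [n1 [cr Ccr Hcr]].
    move/RDCP: Ry => [n2 [cy Ccy Hcy]].
    move/RDCP: Re => [n3 [ce Cce Hce]].
    set m := (n1 + n2 + n3)%N.
    have h1 : (n1 <= m)%N by rewrite /m; lia.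
    have h2 : (n2 <= m)%N by rewrite /m; lia.
    have h3 : (n3 <= m)%N by rewrite /m; lia.
    exists cr, ce; split.
    * split => //; exists cy => //.
      by rewrite -(Hcr _ h1) -(Hcy _ h2); exact: (congr1 (fun f => f m) Hr).
    * split => //; rewrite -(Hce _ h3); exact: (congr1 (fun f => f m) He).
    * rewrite -(Hcr _ h1) -(Hce _ h3).
      by case: Hx => Hx; [left|right]; exact: (congr1 (fun f => f m) Hx).
- move=> [HD HCw] f /RDCP [n [c Cc Hf]].
  have : forall x : D, exists t : D * D * D,
      t.1.1 * t.1.1 = t.1.1 /\ t.1.2 = t.1.2 * t.2 * t.1.2 /\ x = t.1.2 + t.1.1.
    move=> x; have [r [e [[_ [y _ Hr]] [_ He] Hx]]] := HD x isT.
    by exists (e, r, y).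
  move=> /choice [T HT].
  have [r [e [[Cr [y Cy Hr]] [Ce He] Hx]]] := HCw c Cc.
  case: Hx => Hx.
  + exists (fun i => if (i < n)%N then (T (f i)).1.2 else r).
    exists (fun i => if (i < n)%N then (T (f i)).1.1 else e).
    split.
    * split; first exact: RDC_ite.
      exists (fun i => if (i < n)%N then (T (f i)).2 else y); first exact: RDC_ite.
      apply: funext => i; rewrite ?fmulE ?faddE ?fsubE ?foppE /=; case: ifP => // _; by case: (HT (f i)) => _ [].
    * split; first exact: RDC_ite.
      apply: funext => i; rewrite ?fmulE ?faddE ?fsubE ?foppE /=; case: ifP => // _; by case: (HT (f i)).
    * left; apply: funext => i; rewrite ?fmulE ?faddE ?fsubE ?foppE /=; case: ifP => Hi.
      -- by case: (HT (f i)) => _ [].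
      -- by rewrite Hf // leqNgt Hi.
  + exists (fun i => if (i < n)%N then - (T (- f i)).1.2 else r).
    exists (fun i => if (i < n)%N then (T (- f i)).1.1 else e).
    split.
    * split; first exact: RDC_ite.
      exists (fun i => if (i < n)%N then - (T (- f i)).2 else y); first exact: RDC_ite.
      apply: funext => i; rewrite ?fmulE ?faddE ?fsubE ?foppE /=; case: ifP => // _.
      case: (HT (- f i)) => _ [E _].
      by rewrite mulrNN mulrN; congr (- _); exact: E.
    * split; first exact: RDC_ite.
      apply: funext => i; rewrite ?fmulE ?faddE ?fsubE ?foppE /=; case: ifP => // _; by case: (HT (- f i)).
    * right; apply: funext => i; rewrite ?fmulE ?faddE ?fsubE ?foppE /=; case: ifP => Hi.
      -- case: (HT (- f i)); set t := T (- f i) => _ [_ E].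
         by apply: oppr_inj; rewrite E opprD !opprK.
      -- by rewrite Hf // leqNgt Hi.
Qed.
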